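(* Let $H\in\mathbb{R}^{n\times n}$ be symmetric positive semi-definite and let $a_1,\dots,a_n\in\mathbb{R}^n$. Define $\Sigma_0=0\in\mathbb{R}^{n\times n}$ and, for $k=1,\dots,n$, $$\Sigma_k=(I-e_ka_k^T)\Sigma_{k-1}(I-a_ke_k^T)+e_ke_k^T,$$ and set $\ell(a_1,\dots,a_n)=\operatorname{tr}(H\Sigma_n)$. Let $H=LDL^T$ with $L$ unit upper triangular and $D$ nonnegative diagonal. Then $\ell$ attains its global minimum over all $(a_1,\dots,a_n)$ when $a_k=Le_k$ (the $k$-th column of $L$) for every $k$, and the minimum value is $\operatorname{tr}(D)$.
   Context: $e_k$ denotes the $k$-th standard basis vector of $\mathbb{R}^n$. A unit upper triangular matrix is an upper triangular matrix with all diagonal entries equal to $1$. *)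

(* Defs.v *)
From mathcomp Require Import all_boot all_order all_algebra.
Set Implicit Arguments. Unset Strict Implicit. Unset Printing Implicit Defensive.
Import Order.TTheory GRing.Theory Num.Theory.
Local Open Scope ring_scope.

(* standard basis column vector e_k of R^n (k zero-indexed) *)
Definition ebasis (R : ringType) (n : nat) (k : 'I_n) : 'cV[R]_n := delta_mx k 0.

Definition sigma_step (R : comRingType) (n : nat) (a : 'I_n -> 'cV[R]_n)
  (S : 'M[R]_n) (k : 'I_n) : 'M[R]_n :=
  (1%:M - ebasis R k *m (a k)^T) *m S *m (1%:M - a k *m (ebasis R k)^T)
  + ebasis R k *m (ebasis R k)^T.

Definition sigma_n (R : comRingType) (n : nat) (a : 'I_n -> 'cV[R]_n) : 'M[R]_n :=
  foldl (sigma_step a) 0 (enum 'I_n).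

Definition loss (R : comRingType) (n : nat) (H : 'M[R]_n) (a : 'I_n -> 'cV[R]_n) : R :=
  \tr (H *m sigma_n a).

Definition psd (R : numDomainType) (n : nat) (H : 'M[R]_n) : Prop :=
  H^T = H /\ forall x : 'cV[R]_n, 0 <= (x^T *m H *m x) 0 0.

Definition unit_upper_triangular (R : ringType) (n : nat) (L : 'M[R]_n) : Prop :=
  (forall i j : 'I_n, (j < i)%N -> L i j = 0) /\ (forall i : 'I_n, L i i = 1).

Definition nonneg_diagonal (R : numDomainType) (n : nat) (D : 'M[R]_n) : Prop :=
  is_diag_mx D /\ (forall i : 'I_n, 0 <= D i i).

(* Main.v *)
Require Import Defs.
From mathcomp Require Import all_boot all_order all_algebra.
Import Order.TTheory GRing.Theory Num.Theory.
Local Open Scope ring_scope.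
Set Implicit Arguments. Unset Strict Implicit.

Section S.
Variable R : realFieldType.
Variable n : nat.
Variable a : 'I_n -> 'cV[R]_n.

Definition q (S : 'M[R]_n) (x : 'cV[R]_n) : R := (x^T *m S *m x) 0 0.

Lemma eTx (k : 'I_n) (x : 'cV[R]_n) : ((ebasis R k)^T *m x) 0 0 = x k 0.
Proof. by rewrite /ebasis trmx_delta -rowE mxE. Qed.

Lemma q_step S k x :
  q (sigma_step a S k) x = q S (x - a k *m ((ebasis R k)^T *m x)) + x k 0 ^+ 2.
Proof.
have -> : x - a k *m ((ebasis R k)^T *m x) = (1%:M - a k *m (ebasis R k)^T) *m x.
  by rewrite mulmxBl mul1mx mulmxA.
have h1 : x^T *m ((1%:M - ebasis R k *m (a k)^T) *m S *m (1%:M - a k *m (ebasis R k)^T)) *m x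
   = ((1%:M - a k *m (ebasis R k)^T) *m x)^T *m S *m ((1%:M - a k *m (ebasis R k)^T) *m x).
  have hT : (1%:M - a k *m (ebasis R k)^T)^T = 1%:M - ebasis R k *m (a k)^T.
    by rewrite raddfB /= trmx1 trmx_mul trmxK.
  by rewrite trmx_mul hT !mulmxA.
have h2 : (x^T *m (ebasis R k *m (ebasis R k)^T) *m x) 0 0 = x k 0 ^+ 2.
  rewrite -mulmxA -mulmxA mulmxA -[x^T *m _]trmxK trmx_mul trmxK.
  by rewrite mxE big_ord1 mxE eTx expr2.
rewrite /q /sigma_step mulmxDr mulmxDl mxE h1 h2 //.
Qed.

Lemma q0 S : q S 0 = 0.
Proof. by rewrite /q mulmx0 mxE. Qed.

Lemma fold_psd S (s : seq 'I_n) : (forall x, 0 <= q S x) ->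
  forall x, 0 <= q (foldl (sigma_step a) S s) x.
Proof.
elim: s S => [|k s IH] S HS //=.
apply: IH => x; rewrite q_step; apply: addr_ge0 => //; exact: sqr_ge0.
Qed.

Lemma fold_fix S (s : seq 'I_n) (x : 'cV[R]_n) : (forall k, k \in s -> x k 0 = 0) ->
  q (foldl (sigma_step a) S s) x = q S x.
Proof.
elim: s S => [|k s IH] S Hs //=.
rewrite IH; last by move=> j js; apply: Hs; rewrite inE js orbT.
have xk : x k 0 = 0 by apply: Hs; rewrite inE eqxx.
rewrite q_step.
have -> : (ebasis R k)^T *m x = 0.
  by apply/matrixP => i j; rewrite !ord1 eTx mxE.
by rewrite xk mulmx0 subr0 expr0n addr0.
Qed.
End S.

Lemma enum_split n (i : 'I_n) : exists p1 p2,
  enum 'I_n = p1 ++ i :: p2 /\ forall k, k \in p2 -> (i < k)%N.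
Proof.
have : sorted (relpre val ltn) (enum 'I_n).
  by rewrite -sorted_map val_enum_ord iota_ltn_sorted.
have : i \in enum 'I_n by rewrite mem_enum.
case/splitPr => p1 p2 Hs; exists p1, p2; split => //.
move: Hs; rewrite sorted_cat_cons => /andP[_ /(order_path_min _)] H.
have /allP H2 : all (relpre val ltn i) p2.
  by apply: H => y x z /= ; exact: ltn_trans.
exact: H2.
Qed.

Lemma key (R : realFieldType) n (a : 'I_n -> 'cV[R]_n) (L : 'M[R]_n) (i : 'I_n) :
  unit_upper_triangular L ->
  exists S : 'M[R]_n, (forall x, 0 <= q S x) /\
   q (sigma_n a) (col i L) = q S (col i L - a i *m ((ebasis R i)^T *m col i L)) + 1.
Proof.
move=> [Lup Ldiag].
have [p1 [p2 [E Hp2]]] := enum_split i.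
exists (foldl (sigma_step a) 0 p1); split.
  by apply: fold_psd => x; rewrite /q mulmx0 mul0mx mxE.
rewrite /sigma_n E foldl_cat /= fold_fix; last first.
  by move=> k /Hp2 ik; rewrite mxE Lup.
by rewrite q_step mxE Ldiag expr1n.
Qed.


Lemma loss_sum (R : realFieldType) n (a : 'I_n -> 'cV[R]_n) (H L D : 'M[R]_n) :
  is_diag_mx D -> H = L *m D *m L^T ->
  loss H a = \sum_i D i i * q (sigma_n a) (col i L).
Proof.
move=> /is_diag_mxP Dd ->.
rewrite /loss -!mulmxA mxtrace_mulC !mulmxA /mxtrace.
apply: eq_bigr => i _.
rewrite -!mulmxA mxE (bigD1 i) //= big1 ?addr0; last first.
  move=> j ji; rewrite Dd ?mul0r //; by rewrite eq_sym.
congr (_ * _); rewrite /q !mulmxA.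
rewrite !mxE; apply: eq_bigr => j _; rewrite !mxE; congr (_ * _).
by apply: eq_bigr => k _; rewrite !mxE.
Qed.

Theorem mainTheorem2 (R : realFieldType) (n : nat) (H L D : 'M[R]_n) :
  psd H -> unit_upper_triangular L -> nonneg_diagonal D ->
  H = L *m D *m L^T ->
  (forall a : 'I_n -> 'cV[R]_n, loss H (fun k => col k L) <= loss H a) /\
  loss H (fun k => col k L) = \tr D.
Proof.
move=> _ HL [Dd Dnn] HE.
have Heq : loss H (fun k => col k L) = \tr D.
  rewrite (loss_sum _ Dd HE) /mxtrace; apply: eq_bigr => i _.
  have [S [_ ->]] := key (fun k => col k L) i HL.
  rewrite /= -[X in X - _]mul1mx.
  have -> : (ebasis R i)^T *m col i L = 1%:M.
    by apply/matrixP => u v; rewrite !ord1 eTx !mxE; case: HL => _ ->.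
  by rewrite mulmx1 mul1mx subrr q0 add0r mulr1.
split=> // a; rewrite Heq (loss_sum _ Dd HE) /mxtrace; apply: ler_sum => i _.
have [S [HS ->]] := key a i HL.
rewrite -[X in X <= _]mulr1; apply: ler_wpM2l => //.
by rewrite lerDr.
Qed.
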